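(* In the parallel-links routing game with homogeneous costs described in the context and $N=2$ users, for each user $k\in\{1,2\}$ there exists a feasible routing profile $\bar{\mathbf f}$ whose link totals equal the system-optimal link flows $f^*_l$ and such that $J^k(\bar{\mathbf f})\ge\hat J^k$.
   Context: Parallel-links routing game: users $\mathcal N=\{1,\dots,N\}$ share parallel links $\mathcal L=\{1,\dots,L\}$ from a common source to a common destination; link $l$ has capacity $c_l$. User $i$ has demand $r^i>0$, $R=\sum_ir^i<\sum_lc_l$. A routing strategy of user $i$ is $\mathbf f^i=(f^i_l)_l$ with $f^i_l\ge0$, $\sum_lf^i_l=r^i$; $f_l=\sum_if^i_l$. Homogeneous costs: $J^i(\mathbf f)=\sum_lf^i_lT_l(f_l)$, each $T_l:[0,\infty)\to[0,\infty)$ strictly increasing, convex, continuously differentiable, with $T_l(f_l)=T(c_l-f_l)$ for $f_l<c_l$ and $T_l(f_l)=\infty$ for $f_l\ge c_l$, for a single link-independent function $T$ with $T(c_l-f_l)$ strictly increasing in $f_l$. NEP: the unique feasible $\hat{\mathbf f}$ in which each user's strategy minimizes its cost given the others'; $\hat J^i=J^i(\hat{\mathbf f})$. $(f^*_l)$ are the link totals minimizing $\sum_lf_lT_l(f_l)$ over feasible profiles. *)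

(* Defs.v *)
From HB Require Import structures.
From mathcomp Require Import all_boot all_order all_algebra.
From mathcomp Require Import all_classical all_reals all_analysis.
Set Implicit Arguments. Unset Strict Implicit. Unset Printing Implicit Defensive.
Import Order.TTheory GRing.Theory Num.Theory.
Import numFieldNormedType.Exports.
Local Open Scope classical_set_scope.
Local Open Scope ring_scope.

Section Routing.
Variables (R : realType) (N L : nat).

Definition profile := 'I_N -> 'I_L -> R.

Definition tot (f : profile) (l : 'I_L) : R := \sum_(i < N) f i l.

Definition strategy (ri : R) (s : 'I_L -> R) : Prop :=
  (forall l, 0 <= s l) /\ \sum_(l < L) s l = ri.

Definition feasible (r : 'I_N -> R) (f : profile) : Prop :=
  forall i, strategy (r i) (f i).

Definition Tl (T : R -> R) (cl : R) (x : R) : \bar R :=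
  if x < cl then (T (cl - x))%:E else +oo%E.

(* Cost of user i: J^i(f) = sum_l f^i_l T_l(f_l)  (with 0 * +oo = 0). *)
Definition J (T : R -> R) (c : 'I_L -> R) (f : profile) (i : 'I_N) : \bar R :=
  (\sum_(l < L) (f i l)%:E * Tl T (c l) (tot f l))%E.

Definition syscost (T : R -> R) (c : 'I_L -> R) (g : 'I_L -> R) : \bar R :=
  (\sum_(l < L) (g l)%:E * Tl T (c l) (g l))%E.

Definition upd (f : profile) (i : 'I_N) (s : 'I_L -> R) : profile :=
  fun j l => if j == i then s l else f j l.

Definition NEP (T : R -> R) (c : 'I_L -> R) (r : 'I_N -> R) (f : profile) : Prop :=
  feasible r f /\
  forall i (s : 'I_L -> R), strategy (r i) s -> (J T c f i <= J T c (upd f i s) i)%E.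

Definition good_link_cost (T : R -> R) (cl : R) : Prop :=
  let g := fun x => T (cl - x) in
  let D := [set x : R | 0 <= x < cl] in
  (forall x, D x -> 0 <= g x) /\
  (forall x y, D x -> D y -> x < y -> g x < g y) /\
  (forall x y t, D x -> D y -> 0 <= t <= 1 ->
     g (t * x + (1 - t) * y) <= t * g x + (1 - t) * g y) /\
  (exists g' : R -> R,
     {within D, continuous g} /\ {within D, continuous g'} /\
     (forall x, 0 < x < cl -> is_derive x 1 g (g' x))).

End Routing.

(* Main.v *)
From HB Require Import structures.
From mathcomp Require Import all_boot all_order all_algebra.
From mathcomp Require Import all_classical all_reals all_analysis.
From mathcomp Require Import ring lra.
Require Import Defs.
Set Implicit Arguments. Unset Strict Implicit. Unset Printing Implicit Defensive.
Import Order.TTheory GRing.Theory Num.Theory.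
Import numFieldNormedType.Exports.
Local Open Scope classical_set_scope.
Local Open Scope ring_scope.

Section Aux.
Variable R : realType.

Lemma slope_mono (G : R -> R) (cl : R) :
  (forall x y t, 0 <= x < cl -> 0 <= y < cl -> 0 <= t <= 1 ->
     G (t * x + (1 - t) * y) <= t * G x + (1 - t) * G y) ->
  forall p q e, 0 <= p -> p <= q -> 0 < e -> q + e < cl ->
  G (p + e) - G p <= G (q + e) - G q.
Proof.
move=> hconv p q e p0 pq e0 qe.
have d0 : 0 < q + e - p by lra.
set t := (q - p) / (q + e - p).
have t0 : 0 <= t by rewrite /t divr_ge0 //; lra.
have t1 : t <= 1 by rewrite /t ler_pdivrMr //; lra.
have hp : 0 <= p < cl by apply/andP; split; lra.
have hq : 0 <= q + e < cl by apply/andP; split; lra.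
have h1 := hconv _ _ t hp hq.
have h2 := hconv _ _ (1 - t) hp hq.
have E1 : t * p + (1 - t) * (q + e) = p + e.
  by rewrite /t; field; lra.
have E2 : (1 - t) * p + (1 - (1 - t)) * (q + e) = q.
  by rewrite /t; field; lra.
rewrite E1 in h1; rewrite E2 in h2.
have := h1 (introT andP (conj t0 t1)) => {}h1.
have t0' : 0 <= 1 - t <= 1 by apply/andP; split; lra.
have := h2 t0' => {}h2.
lra.
Qed.

Lemma sum_two (L : nat) (u v : 'I_L -> R) (l m : 'I_L) : l != m ->
  (forall t, t != l -> t != m -> u t = v t) ->
  \sum_t u t = \sum_t v t + (u l - v l) + (u m - v m).
Proof.
move=> lm huv.
have ml : m != l by rewrite eq_sym.
suff : \sum_t u t - \sum_t v t = (u l - v l) + (u m - v m) by lra.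
rewrite -sumrB (bigD1 l) //= (bigD1 m) //=.
rewrite big1; first by rewrite addr0.
by move=> t /andP [] h1 h2; rewrite huv // subrr.
Qed.

Lemma sum_strict (L : nat) (u v : 'I_L -> R) (l : 'I_L) :
  (forall t, u t <= v t) -> u l < v l -> \sum_t u t < \sum_t v t.
Proof.
move=> huv hl.
rewrite [X in X < _](bigD1 l) //= [X in _ < X](bigD1 l) //=.
have : \sum_(t < L | t != l) u t <= \sum_(t < L | t != l) v t.
  by apply: ler_sum => t _.
lra.
Qed.

End Aux.

Section Ext.
Variables (R : realType) (L : nat) (c : 'I_L -> R) (T : R -> R).

Lemma gl_ge0 cl : good_link_cost T cl -> forall x, 0 <= x < cl -> 0 <= T (cl - x).
Proof. by case=> h _ x hx; apply: h. Qed.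

Lemma gl_lt cl : good_link_cost T cl -> forall x y, 0 <= x < cl -> 0 <= y < cl ->
  x < y -> T (cl - x) < T (cl - y).
Proof. by case=> _ [h _] x y hx hy xy; apply: h. Qed.

Lemma gl_le cl : good_link_cost T cl -> forall x y, 0 <= x < cl -> 0 <= y < cl ->
  x <= y -> T (cl - x) <= T (cl - y).
Proof.
move=> h x y hx hy; rewrite le_eqVlt => /orP [/eqP -> //|xy].
by apply/ltW; apply: gl_lt.
Qed.

Lemma gl_conv cl : good_link_cost T cl ->
  forall x y t, 0 <= x < cl -> 0 <= y < cl -> 0 <= t <= 1 ->
     T (cl - (t * x + (1 - t) * y)) <= t * T (cl - x) + (1 - t) * T (cl - y).
Proof. by case=> _ [_ [h _]] x y t hx hy ht; apply: (h x y t). Qed.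

Lemma gl_slope cl : good_link_cost T cl -> forall p q e, 0 <= p -> p <= q -> 0 < e -> q + e < cl ->
  T (cl - (p + e)) - T (cl - p) <= T (cl - (q + e)) - T (cl - q).
Proof.
move=> h; apply: (slope_mono (G := fun x => T (cl - x))).
exact: gl_conv.
Qed.

Lemma Tl_fin cl x : x < cl -> Tl T cl x = (T (cl - x))%:E.
Proof. by rewrite /Tl => ->. Qed.

Lemma term_ge0 cl a x : good_link_cost T cl -> 0 <= a -> 0 <= x ->
  (0 <= a%:E * Tl T cl x)%E.
Proof.
move=> h a0 x0; apply: mule_ge0; first by rewrite lee_fin.
rewrite /Tl; case: ifP => hx //.
by rewrite lee_fin; apply: (gl_ge0 h); apply/andP.
Qed.

Lemma term_fin cl a x : a = 0 \/ x < cl ->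
  (a%:E * Tl T cl x)%E = (a * T (cl - x))%:E.
Proof.
case=> [->|hx]; first by rewrite mul0e mul0r.
by rewrite Tl_fin // EFinM.
Qed.

Lemma term_inf cl a x : 0 < a -> cl <= x -> (a%:E * Tl T cl x)%E = +oo%E.
Proof.
move=> a0 hx; rewrite /Tl ifF; last by apply/negbTE; rewrite -leNgt.
by rewrite gt0_muley // lte_fin.
Qed.

Lemma sum_inf (F : 'I_L -> \bar R) l : (forall t, (0 <= F t)%E) -> F l = +oo%E ->
  (\sum_t F t)%E = +oo%E.
Proof.
move=> h hl; rewrite (bigD1 l) //= hl addye //.
rewrite -ltNye; apply: (lt_le_trans ltNy0).
by apply: sume_ge0 => t _.
Qed.

Hypothesis hT : forall l, good_link_cost T (c l).

Lemma J_fin (N : nat) (f : profile R N L) i :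
  (forall t, f i t = 0 \/ tot f t < c t) ->
  J T c f i = (\sum_t f i t * T (c t - tot f t))%:E.
Proof.
move=> h; rewrite /J -sumEFin; apply: eq_bigr => t _.
exact: term_fin.
Qed.

Lemma J_inf (N : nat) (f : profile R N L) i l :
  (forall t, 0 <= f i t) -> (forall t, 0 <= tot f t) ->
  0 < f i l -> c l <= tot f l -> J T c f i = +oo%E.
Proof.
move=> h1 h2 hl hc; rewrite /J; apply: (sum_inf (l := l)).
  by move=> t; apply: term_ge0.
exact: term_inf.
Qed.

Lemma sys_fin (g : 'I_L -> R) :
  (forall t, g t = 0 \/ g t < c t) ->
  syscost T c g = (\sum_t g t * T (c t - g t))%:E.
Proof.
move=> h; rewrite /syscost -sumEFin; apply: eq_bigr => t _.
exact: term_fin.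
Qed.

Lemma sys_inf (g : 'I_L -> R) l :
  (forall t, 0 <= g t) -> 0 < g l -> c l <= g l -> syscost T c g = +oo%E.
Proof.
move=> h1 hl hc; rewrite /syscost; apply: (sum_inf (l := l)).
  by move=> t; apply: term_ge0.
exact: term_inf.
Qed.

End Ext.

Section Misc.
Variables (R : realType) (L : nat).

Lemma sum2 (F : 'I_2 -> R) (j k : 'I_2) : j != k -> \sum_i F i = F j + F k.
Proof.
rewrite big_ord_recr /= big_ord_recr /= big_ord0 add0r.
move: j k => [[|[|n]] Hj] [[|[|m]] Hk] //= _.
- by congr (F _ + F _); apply: val_inj.
- by rewrite addrC; congr (F _ + F _); apply: val_inj.
Qed.

Lemma exists_dev (c a : 'I_L -> R) rho :
  (forall t, 0 <= a t) -> 0 < rho -> rho + \sum_t a t < \sum_t c t ->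
  exists s : 'I_L -> R, (forall t, 0 <= s t) /\ \sum_t s t = rho /\
    forall t, s t = 0 \/ s t + a t < c t.
Proof.
move=> ha hrho hsum.
pose w t := Num.max (c t - a t) 0.
have w0 t : 0 <= w t by rewrite /w le_max lexx orbT.
have wc t : c t - a t <= w t by rewrite /w le_max lexx.
have hW : \sum_t c t - \sum_t a t <= \sum_t w t.
  by rewrite -sumrB; apply: ler_sum => t _.
have W0 : rho < \sum_t w t by lra.
have Wp : 0 < \sum_t w t by lra.
exists (fun t => rho / (\sum_t w t) * w t); split; [|split].
- by move=> t; apply: mulr_ge0; [apply: divr_ge0; lra|apply: w0].
- by rewrite -mulr_sumr divfK //; lra.
- move=> t; have [h|h] := leP (c t - a t) 0.
    by left; rewrite /w max_r // mulr0.
  right; rewrite /w max_l; last by apply: ltW.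
  have q1 : rho / (\sum_t w t) < 1 by rewrite ltr_pdivrMr // mul1r.
  have q0 : 0 <= rho / (\sum_t w t) by apply: divr_ge0; lra.
  nra.
Qed.

Lemma prop_profile (r : 'I_2 -> R) (g : 'I_L -> R) :
  (forall i, 0 < r i) -> (forall t, 0 <= g t) -> \sum_t g t = \sum_i r i ->
  exists f : profile R 2 L, feasible r f /\ forall t, tot f t = g t.
Proof.
move=> hr hg hs.
have S0 : 0 < \sum_i r i by rewrite (sum2 _ (j:=ord0) (k:=ord_max)) //; have := hr ord0; have := hr ord_max; lra.
exists (fun i t => g t * (r i / \sum_i r i)); split.
- move=> i; split.
    by move=> t; apply: mulr_ge0 => //; apply: divr_ge0; [apply: ltW|apply: ltW].
  by rewrite -mulr_suml hs mulrC divfK //; lra.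
- move=> t; rewrite /tot -mulr_sumr -mulr_suml mulfV ?mulr1 //; lra.
Qed.

Lemma feas_sum (N : nat) (r : 'I_N -> R) (f : profile R N L) :
  feasible r f -> \sum_t tot f t = \sum_i r i.
Proof.
move=> h; rewrite /tot exchange_big; apply: eq_bigr => i _.
by case: (h i).
Qed.

Lemma feas_tot0 (N : nat) (r : 'I_N -> R) (f : profile R N L) t :
  feasible r f -> 0 <= tot f t.
Proof. by move=> h; apply: sumr_ge0 => i _; case: (h i) => h1 _; apply: h1. Qed.

End Misc.

Lemma ineqA (R : realType) (e p x A1 A0 AY AYe : R) : 0 < e -> 0 <= p -> p <= x - e ->
  A1 <= AY -> A0 <= A1 -> A1 - A0 <= AY - AYe ->
  (p + e) * A1 - p * A0 <= x * AY - (x - e) * AYe.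
Proof.
move=> he hp hpx h1 h2 h3.
have p1 : 0 <= e * (AY - A1) by apply: mulr_ge0; lra.
have p2 : 0 <= (x - e - p) * (A1 - A0) by apply: mulr_ge0; lra.
have p3 : 0 <= (x - e) * ((AY - AYe) - (A1 - A0)) by apply: mulr_ge0; lra.
lra.
Qed.

Lemma ineqB (R : realType) (e b y z B1 B0 Z Ze : R) : 0 < e -> 0 <= b -> b <= y -> y + e < z ->
  B1 < Z -> B0 <= B1 -> B1 - B0 <= Z - Ze ->
  (b + e) * B1 - b * B0 < z * Z - (z - e) * Ze.
Proof.
move=> he hb hby hyz h1 h2 h3.
have p1 : 0 < e * (Z - B1) by apply: mulr_gt0; lra.
have p2 : 0 <= (z - e - b) * (B1 - B0) by apply: mulr_ge0; lra.
have p3 : 0 <= (z - e) * ((Z - Ze) - (B1 - B0)) by apply: mulr_ge0; lra.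
lra.
Qed.

Lemma final (R : realType) (Gl Gm : R -> R) (cl cm p x Y e b y z : R) :
  (forall u v, 0 <= u < cl -> 0 <= v < cl -> u <= v -> Gl u <= Gl v) ->
  (forall p q e, 0 <= p -> p <= q -> 0 < e -> q + e < cl -> Gl (p+e) - Gl p <= Gl (q+e) - Gl q) ->
  (forall u v, 0 <= u < cm -> 0 <= v < cm -> u <= v -> Gm u <= Gm v) ->
  (forall u v, 0 <= u < cm -> 0 <= v < cm -> u < v -> Gm u < Gm v) ->
  (forall p q e, 0 <= p -> p <= q -> 0 < e -> q + e < cm -> Gm (p+e) - Gm p <= Gm (q+e) - Gm q) ->
  0 < e -> 0 <= p -> p <= x - e -> x <= Y -> Y < cl -> 0 <= b -> b <= y -> 0 <= y ->
  y + e < z -> z < cm ->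
  0 <= ((p + e) * Gl (p + e) - p * Gl p) + ((z - e) * Gm (z - e) - z * Gm z) ->
  0 <= ((x - e) * Gl (Y - e) - x * Gl Y) + ((b + e) * Gm (y + e) - b * Gm y) -> False.
Proof.
move=> lel slol lem ltm slom he hp hpx hxY hY hb hby hy hyz hz H1 H2.
have a1 : Gl (p + e) <= Gl Y by apply: lel; try (apply/andP; split); lra.
have a2 := slol p (Y - e) e hp ltac:(lra) he ltac:(lra).
rewrite subrK in a2.
have a3 : Gl p <= Gl (p + e) by apply: lel; try (apply/andP; split); lra.
have hA := ineqA he hp hpx a1 a3 a2.
have b1 : Gm (y + e) < Gm z by apply: ltm; try (apply/andP; split); lra.
have b2 := slom y (z - e) e hy ltac:(lra) he ltac:(lra).
rewrite subrK in b2.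
have b3 : Gm y <= Gm (y + e) by apply: lem; try (apply/andP; split); lra.
have hB := ineqB he hb hby hyz b1 b3 b2.
lra.
Qed.

Section Core.
Variables (R : realType) (L : nat) (c : 'I_L -> R) (r : 'I_2 -> R) (T : R -> R).
Hypotheses (hc : forall l, 0 < c l) (hr : forall i, 0 < r i)
  (hR : \sum_(i < 2) r i < \sum_(l < L) c l)
  (hT : forall l, good_link_cost T (c l)).
Variables (fhat : profile R 2 L) (fstar : 'I_L -> R).
Hypotheses (hNE : NEP T c r fhat)
  (hstar_feas : exists f, feasible r f /\ forall l, tot f l = fstar l)
  (hstar_opt : forall f, feasible r f -> (syscost T c fstar <= syscost T c (tot f))%E).

Lemma fs0 t : 0 <= fstar t.
Proof. by case: hstar_feas => f [hf <-]; apply: feas_tot0 hf. Qed.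

Lemma fsum : \sum_t fstar t = \sum_i r i.
Proof.
case: hstar_feas => f [hf hft]; rewrite -(feas_sum hf).
by apply: eq_bigr => t _; rewrite hft.
Qed.

Lemma fs_fin t : 0 < fstar t -> fstar t < c t.
Proof.
move=> ht; rewrite ltNge; apply/negP => hct.
have Sp : 0 < \sum_i r i.
  by rewrite (sum2 _ (j:=ord0) (k:=ord_max)) //; have := hr ord0; have := hr ord_max; lra.
have [s [s0 [ss sc]]] : exists s : 'I_L -> R, (forall t, 0 <= s t) /\ \sum_t s t = \sum_i r i /\
    forall t, s t = 0 \/ s t + 0 < c t.
  apply: (@exists_dev R L c (fun _ => 0) (\sum_i r i)); [by move=> _; exact: lexx|exact: Sp|by rewrite big1_eq addr0].
have [f' [hf' hf't]] := prop_profile hr s0 ss.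
have := hstar_opt hf'.
have -> : tot f' = s by apply/funext => u; rewrite hf't.
rewrite (sys_inf hT (l := t)) //; last exact: fs0.
rewrite (sys_fin (c:=c)); last by move=> u; case: (sc u) => [->|h]; [left|right; rewrite -(addr0 (s u))].
by rewrite leye_eq.
Qed.

Lemma tot2 (f : profile R 2 L) j k t : j != k -> tot f t = f j t + f k t.
Proof. by move=> jk; rewrite /tot (sum2 _ jk). Qed.

Lemma upd_j j s t : upd fhat j s j t = s t.
Proof. by rewrite /upd eqxx. Qed.

Lemma upd_k j k s t : j != k -> upd fhat j s k t = fhat k t.
Proof. by move=> jk; rewrite /upd eq_sym (negbTE jk). Qed.

Lemma tot_upd j k s t : j != k -> tot (upd fhat j s) t = s t + fhat k t.
Proof. by move=> jk; rewrite (tot2 _ _ jk) upd_j upd_k. Qed.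

Lemma fh0 i t : 0 <= fhat i t.
Proof. by case: (hNE.1 i) => h _; apply: h. Qed.

Lemma fh_fin j k : j != k -> forall t, 0 < fhat j t -> tot fhat t < c t.
Proof.
move=> jk t ht; rewrite ltNge; apply/negP => hct.
have [s [s0 [ss sc]]] : exists s : 'I_L -> R, (forall t, 0 <= s t) /\ \sum_t s t = r j /\
    forall t, s t = 0 \/ s t + fhat k t < c t.
  apply: (@exists_dev R L c (fhat k) (r j)); [exact: fh0|exact: hr|].
  by case: (hNE.1 k) => _ ->; rewrite -(sum2 _ jk).
have hs : strategy (r j) s by split.
have := hNE.2 j s hs.
rewrite (J_inf hT (i:=j) (l:=t)) //; last 2 first.
- exact: fh0.
- by move=> u; apply: (feas_tot0 _ hNE.1).
rewrite (J_fin T); first by rewrite leye_eq.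
by move=> u; rewrite upd_j (tot_upd _ _ jk).
Qed.

Lemma below j k : j != k -> forall l, fhat j l <= fstar l.
Proof.
move=> jk l; rewrite leNgt; apply/negP => hxl.
set x := fhat j l in hxl *.
set Y := tot fhat l.
have hYx : x <= Y by rewrite /Y (tot2 _ _ jk) /x; have := fh0 k l; lra.
have hx0 : 0 < x by have := fs0 l; lra.
have hYc : Y < c l by apply: (fh_fin jk).
have hsum : \sum_t tot fhat t = \sum_t fstar t by rewrite fsum; apply: feas_sum; exact: hNE.1.
have [m hm] : exists m, tot fhat m < fstar m.
  case: (boolP [exists m, tot fhat m < fstar m]) => [/existsP //|].
  rewrite negb_exists => /forallP hall.
  have : \sum_t fstar t < \sum_t tot fhat t.
    apply: (sum_strict (l := l)); first by move=> t; have := hall t; rewrite -leNgt.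
    by rewrite -/Y; lra.
  by rewrite hsum; lra.
set y := tot fhat m in hm.
set z := fstar m in hm.
have lm : l != m.
  by apply/eqP => e; move: hm; rewrite /y /z -e -/Y; lra.
have ml : m != l by rewrite eq_sym.
have hy0 : 0 <= y by apply: (feas_tot0 _ hNE.1).
have hz0 : 0 < z by lra.
have hzc : z < c m by apply: fs_fin.
set b := fhat j m.
have hby : b <= y by rewrite /y (tot2 _ _ jk) /b; have := fh0 k m; lra.
have hb0 : 0 <= b by apply: fh0.
have hyb : y = b + fhat k m by rewrite /y (tot2 _ _ jk).
have hYk : Y = x + fhat k l by rewrite /Y (tot2 _ _ jk).
set p := fstar l in hxl *.
have hp0 : 0 <= p by apply: fs0.
set e := Num.min (x - p) ((z - y) / 2).
have he0 : 0 < e by rewrite /e lt_min; apply/andP; split; lra.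
have hexp : e <= x - p by rewrite /e ge_min lexx.
have hezy : e <= (z - y) / 2 by rewrite /e ge_min lexx orbT.
pose g' := fun t => if t == l then p + e else if t == m then z - e else fstar t.
have g'l : g' l = p + e by rewrite /g' eqxx.
have g'm : g' m = z - e by rewrite /g' (negbTE ml) eqxx.
have g'o t : t != l -> t != m -> g' t = fstar t.
  by move=> h1 h2; rewrite /g' (negbTE h1) (negbTE h2).
have g'0 t : 0 <= g' t.
  rewrite /g'; case: ifP => _; first lra.
  case: ifP => _; [lra|exact: fs0].
have g'sum : \sum_t g' t = \sum_i r i.
  rewrite (sum_two lm g'o) g'l g'm -/p -/z fsum; lra.
have [f' [hf' hf't]] := prop_profile hr g'0 g'sum.
have H1 := hstar_opt hf'.
have E : tot f' = g' by apply/funext => u; rewrite hf't.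
rewrite E in H1.
have fsc t : fstar t = 0 \/ fstar t < c t.
  have := fs0 t; rewrite le_eqVlt => /orP [/eqP <-|h]; [by left|right; exact: fs_fin].
rewrite (sys_fin T (g:=fstar)) // (sys_fin T (g:=g')) in H1; last first.
  move=> t; case: (eqVneq t l) => [->|tl]; first by right; rewrite g'l; lra.
  case: (eqVneq t m) => [->|tm]; first by right; rewrite g'm; lra.
  by rewrite g'o.
rewrite lee_fin in H1.
rewrite [X in _ <= X](sum_two (v := fun t => fstar t * T (c t - fstar t)) lm) in H1; last first.
  by move=> t h1 h2; rewrite g'o.
rewrite g'l g'm -/p -/z in H1.
pose s' := fun t => if t == l then x - e else if t == m then b + e else fhat j t.
have s'l : s' l = x - e by rewrite /s' eqxx.
have s'm : s' m = b + e by rewrite /s' (negbTE ml) eqxx.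
have s'o t : t != l -> t != m -> s' t = fhat j t.
  by move=> h1 h2; rewrite /s' (negbTE h1) (negbTE h2).
have s'0 t : 0 <= s' t.
  rewrite /s'; case: ifP => _; first lra.
  case: ifP => _; [lra|exact: fh0].
have s'sum : \sum_t s' t = r j.
  rewrite (sum_two lm s'o) s'l s'm -/x -/b.
  by case: (hNE.1 j) => _ ->; lra.
have H2 := hNE.2 j s' (conj s'0 s'sum).
have totk t : tot fhat t = fhat j t + fhat k t by apply: tot2.
rewrite (J_fin T (f := fhat)) in H2; last first.
  move=> t; have := fh0 j t; rewrite le_eqVlt => /orP [/eqP <-|h]; [by left|right].
  exact: (fh_fin jk).
rewrite (J_fin T (f := upd fhat j s')) in H2; last first.
  move=> t; rewrite upd_j (tot_upd _ _ jk).
  case: (eqVneq t l) => [->|tl].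
    by right; rewrite s'l; lra.
  case: (eqVneq t m) => [->|tm].
    by right; rewrite s'm; lra.
  rewrite s'o // -totk.
  have := fh0 j t; rewrite le_eqVlt => /orP [/eqP <-|h]; [by left|right; exact: (fh_fin jk)].
rewrite lee_fin in H2.
rewrite [X in _ <= X](sum_two (v := fun t => fhat j t * T (c t - tot fhat t)) lm) in H2; last first.
  by move=> t h1 h2; rewrite upd_j (tot_upd _ _ jk) s'o // -totk.
rewrite !upd_j !(tot_upd _ _ jk) s'l s'm in H2.
have E1 : x - e + fhat k l = Y - e by rewrite hYk; lra.
have E2 : b + e + fhat k m = y + e by rewrite hyb; lra.
rewrite E1 E2 -/y in H2.
have H1' : 0 <= ((p + e) * T (c l - (p + e)) - p * T (c l - p))
  + ((z - e) * T (c m - (z - e)) - z * T (c m - z)) by lra.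
have H2' : 0 <= ((x - e) * T (c l - (Y - e)) - x * T (c l - Y))
  + ((b + e) * T (c m - (y + e)) - b * T (c m - y))  by rewrite -/x -/Y -/b in H2; lra.
apply: (@final R (fun v => T (c l - v)) (fun v => T (c m - v)) (c l) (c m) p x Y e b y z
  (gl_le (hT l)) (gl_slope (hT l)) (gl_le (hT m)) (gl_lt (hT m)) (gl_slope (hT m))
  he0 hp0 _ hYx hYc hb0 hby hy0 _ hzc H1' H2').
- lra.
- lra.
Qed.
End Core.

Theorem lemma3p3 (R : realType) (L : nat) (c : 'I_L -> R) (r : 'I_2 -> R)
  (T : R -> R)
  (hc : forall l, 0 < c l)
  (hr : forall i, 0 < r i)
  (hR : \sum_(i < 2) r i < \sum_(l < L) c l)
  (hT : forall l, good_link_cost T (c l))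
  (fhat : profile R 2 L)
  (hNE : NEP T c r fhat)
  (hNEuniq : forall f, NEP T c r f -> f = fhat)
  (fstar : 'I_L -> R)
  (hstar_feas : exists f, feasible r f /\ forall l, tot f l = fstar l)
  (hstar_opt : forall f, feasible r f -> (syscost T c fstar <= syscost T c (tot f))%E) :
  forall k : 'I_2, exists fbar : profile R 2 L,
    feasible r fbar /\ (forall l, tot fbar l = fstar l) /\
    (J T c fhat k <= J T c fbar k)%E.
Proof.
move=> k.
pose j : 'I_2 := if k == ord0 then ord_max else ord0.
have jk : j != k by rewrite /j; case: (k =P ord0) => [->|/eqP h] //; rewrite eq_sym.
have kj : k != j by rewrite eq_sym.
have hb := below hr hR hT hNE hstar_feas hstar_opt jk.
pose s := fun l => fstar l - fhat j l.
exists (upd fhat k s); split; [|split].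
- move=> i; case: (eqVneq i k) => [->|ik].
    rewrite /upd eqxx; split.
      by move=> l; rewrite /s subr_ge0.
    rewrite /s sumrB (fsum hstar_feas) (sum2 _ jk).
    by case: (hNE.1 j) => _ ->; rewrite addrC addKr.
  by rewrite /upd (negbTE ik); exact: hNE.1.
- by move=> l; rewrite /tot (sum2 _ kj) /upd eqxx (negbTE jk) /s subrK.
- apply: hNE.2; split.
    by move=> l; rewrite /s subr_ge0.
  rewrite /s sumrB (fsum hstar_feas) (sum2 _ jk).
  by case: (hNE.1 j) => _ ->; rewrite addrC addKr.
Qed.
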